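(* Let $J_0$ be a two-sided $p$-periodic Jacobi matrix, $1\le q\le\infty$, and $\varepsilon>0$. There is a constant $C$ such that $$e^{1-p}\bigl\|\tilde d_m((a,b),\mathcal{T}_{J_0})\bigr\|_{\ell^q}\le\bigl\|d_m((a,b),\mathcal{T}_{J_0})\bigr\|_{\ell^q}\le C\bigl\|\tilde d_m((a,b),\mathcal{T}_{J_0})\bigr\|_{\ell^q}$$ for all bounded sequences $\{(a_n,b_n)\}_{n\ge1}$ with $b_n\in\mathbb{R}$ and $\varepsilon^{-1}>a_n>\varepsilon$ for all $n$, where all $\ell^q$ norms are taken over $m\in\{1,2,3,\dots\}$.
   Context: For a two-sided $p$-periodic Jacobi matrix $J_0$ (tridiagonal on $\ell^2(\mathbb{Z})$ with $p$-periodic parameters $a^{(0)}_n>0$, $b^{(0)}_n\in\mathbb{R}$), its discriminant is $\Delta_{J_0}(x)=\mathrm{Tr}(\Lambda_p(x)\cdots\Lambda_1(x))$ with $\Lambda_n(x)=\frac1{a^{(0)}_n}\begin{pmatrix}x-b^{(0)}_n&-1\\(a^{(0)}_n)^2&0\end{pmatrix}$, and the isospectral torus $\mathcal{T}_{J_0}$ is the set of two-sided $p$-periodic Jacobi parameter sequences with the same discriminant. For sequences $(a,b),(a',b')$ (two-sided ones restricted to indices $\ge1$): $d_m((a,b),(a',b'))=\sum_{k=0}^\infty e^{-k}(|a_{m+k}-a'_{m+k}|+|b_{m+k}-b'_{m+k}|)$ and $\tilde d_m((a,b),(a',b'))=\sum_{k=0}^{p-1}(|a_{m+k}-a'_{m+k}|+|b_{m+k}-b'_{m+k}|)$;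 distances to $\mathcal{T}_{J_0}$ are infima over $(a',b')\in\mathcal{T}_{J_0}$. *)

(* Defs.v *)
From Stdlib Require Import Reals ZArith Lia.
From Coquelicot Require Import Coquelicot.
Open Scope R_scope.

(** 2x2 real matrices as (m11, m12, m21, m22). *)
Definition mat2 : Type := (R * R * R * R)%type.

Definition mat2_id : mat2 := (1, 0, 0, 1).

Definition mat2_mul (A B : mat2) : mat2 :=
  match A, B with
  | (a11, a12, a21, a22), (b11, b12, b21, b22) =>
    (a11 * b11 + a12 * b21, a11 * b12 + a12 * b22,
     a21 * b11 + a22 * b21, a21 * b12 + a22 * b22)
  end.

Definition mat2_tr (A : mat2) : R :=
  match A with (a11, _, _, a22) => a11 + a22 end.

(** Lambda_n(x) = (1/a_n) [[x - b_n, -1], [a_n^2, 0]]. *)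
Definition Lambda (a b : Z -> R) (n : nat) (x : R) : mat2 :=
  let an := a (Z.of_nat n) in
  let bn := b (Z.of_nat n) in
  ((x - bn) / an, (-1) / an, an ^ 2 / an, 0).

Fixpoint transfer (a b : Z -> R) (n : nat) (x : R) : mat2 :=
  match n with
  | O => mat2_id
  | S k => mat2_mul (Lambda a b (S k) x) (transfer a b k x)
  end.

Definition discriminant (p : nat) (a b : Z -> R) (x : R) : R :=
  mat2_tr (transfer a b p x).

Definition periodic_jacobi (p : nat) (a b : Z -> R) : Prop :=
  (forall n : Z, a (n + Z.of_nat p)%Z = a n) /\
  (forall n : Z, b (n + Z.of_nat p)%Z = b n) /\
  (forall n : Z, 0 < a n).

Definition iso_torus (p : nat) (a0 b0 : Z -> R) (a' b' : Z -> R) : Prop :=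
  periodic_jacobi p a' b' /\
  (forall x : R, discriminant p a' b' x = discriminant p a0 b0 x).

Definition jdiff (a b : nat -> R) (a' b' : Z -> R) (n : nat) : R :=
  Rabs (a n - a' (Z.of_nat n)) + Rabs (b n - b' (Z.of_nat n)).

Definition d_m (a b : nat -> R) (a' b' : Z -> R) (m : nat) : R :=
  Series (fun k : nat => exp (- INR k) * jdiff a b a' b' (m + k)).

Fixpoint fsum (f : nat -> R) (n : nat) : R :=
  match n with
  | O => 0
  | S k => fsum f k + f k
  end.

Definition dt_m (p : nat) (a b : nat -> R) (a' b' : Z -> R) (m : nat) : R :=
  fsum (fun k : nat => jdiff a b a' b' (m + k)) p.

Definition d_torus (p : nat) (a0 b0 : Z -> R) (a b : nat -> R) (m : nat) : R :=
  real (Glb_Rbar (fun r : R => exists a' b' : Z -> R,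
          iso_torus p a0 b0 a' b' /\ r = d_m a b a' b' m)).

Definition dt_torus (p : nat) (a0 b0 : Z -> R) (a b : nat -> R) (m : nat) : R :=
  real (Glb_Rbar (fun r : R => exists a' b' : Z -> R,
          iso_torus p a0 b0 a' b' /\ r = dt_m p a b a' b' m)).

(** x^y for x >= 0, y > 0 (with 0^y = 0). *)
Definition rpow (x y : R) : R :=
  if Rlt_dec 0 x then Rpower x y else 0.

(** ell^q norm over m in {1,2,3,...}, valued in [0, +oo]; q in [1, +oo]. *)
Definition lq_norm (q : Rbar) (f : nat -> R) : Rbar :=
  match q with
  | Finite q' =>
      match Lim_seq (fun N : nat => fsum (fun i : nat => rpow (Rabs (f (S i))) q') N) with
      | Finite s => Finite (rpow s (/ q'))
      | p_infty => p_infty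
      | m_infty => m_infty
      end
  | p_infty => Sup_seq (fun i : nat => Finite (Rabs (f (S i))))
  | m_infty => m_infty
  end.

(* Main.v *)
Require Import Defs.
From Stdlib Require Import Reals ZArith Lra Lia List.
From Coquelicot Require Import Coquelicot.
Open Scope R_scope.

Fixpoint peval (l : list R) (x : R) : R :=
  match l with nil => 0 | c :: l' => c + x * peval l' x end.
Fixpoint padd (l1 l2 : list R) : list R :=
  match l1, l2 with
  | nil, _ => l2
  | _, nil => l1
  | c1 :: t1, c2 :: t2 => (c1 + c2) :: padd t1 t2 end.
Fixpoint pscale (c : R) (l : list R) : list R :=
  match l with nil => nil | h :: t => (c * h) :: pscale c t end.
Definition coef (l : list R) (j : nat) : R := nth j l 0.

Lemma peval_padd l1 l2 x : peval (padd l1 l2) x = peval l1 x + peval l2 x.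
Proof.
  revert l2; induction l1 as [|c1 t1 IH]; intros [|c2 t2]; simpl; try ring.
  rewrite IH; ring.
Qed.
Lemma peval_pscale c l x : peval (pscale c l) x = c * peval l x.
Proof. induction l as [|h t IH]; simpl; [ring| rewrite IH; ring]. Qed.
Lemma coef_padd l1 l2 j : coef (padd l1 l2) j = coef l1 j + coef l2 j.
Proof.
  unfold coef; revert l2 j; induction l1 as [|c1 t1 IH]; intros [|c2 t2] [|j]; simpl; try ring;
  try (destruct j; simpl; ring); apply IH.
Qed.
Lemma coef_pscale c l j : coef (pscale c l) j = c * coef l j.
Proof.
  unfold coef; revert j; induction l as [|h t IH]; intros [|j]; simpl; try ring. apply IH.
Qed.
Lemma coef_cons0 c l : coef (c :: l) 0 = c.
Proof. reflexivity. Qed.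
Lemma coef_consS c l j : coef (c :: l) (S j) = coef l j.
Proof. reflexivity. Qed.
Lemma coef_nil j : coef nil j = 0.
Proof. destruct j; reflexivity. Qed.

Fixpoint sumabs (l : list R) : R := match l with nil => 0 | c :: t => Rabs c + sumabs t end.
Lemma sumabs_ge0 l : 0 <= sumabs l.
Proof. induction l; simpl; [lra| pose proof (Rabs_pos a); lra]. Qed.
Lemma peval_small l x : Rabs x <= 1 -> Rabs (peval l x) <= sumabs l.
Proof.
  intro Hx; induction l as [|c t IH]; simpl.
  - rewrite Rabs_R0; lra.
  - eapply Rle_trans; [apply Rabs_triang|]. rewrite Rabs_mult.
    pose proof (Rabs_pos x); pose proof (Rabs_pos (peval t x)).
    assert (Rabs x * Rabs (peval t x) <= 1 * sumabs t) by (apply Rmult_le_compat; lra). lra.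
Qed.

Lemma poly_zero l : (forall x, 0 < x -> peval l x = 0) -> forall j, coef l j = 0.
Proof.
  induction l as [|c t IH]; intros H j.
  - apply coef_nil.
  - assert (Hc : c = 0).
    { destruct (Req_dec c 0) as [e|n]; [exact e|exfalso].
      pose proof (sumabs_ge0 t) as HS0. remember (sumabs t) as S.
      pose proof (Rabs_pos_lt c n).
      set (x := Rabs c / (Rabs c + S + 1)).
      assert (Hx0 : 0 < x) by (unfold x; apply Rdiv_lt_0_compat; lra).
      assert (Hx1 : x < 1). { unfold x. apply (proj1 (Rdiv_lt_1 (Rabs c) (Rabs c + S + 1) ltac:(lra))). lra. }
      pose proof (H x Hx0) as Hz. simpl in Hz.
      assert (Hp : Rabs (peval t x) <= S) by (rewrite HeqS; apply peval_small; rewrite Rabs_pos_eq; lra).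
      assert (H2 : Rabs c = Rabs (x * peval t x)) by (replace c with (- (x * peval t x)) by lra; apply Rabs_Ropp).
      rewrite Rabs_mult, (Rabs_pos_eq x) in H2 by lra.
      assert (x * Rabs (peval t x) <= x * S) by (apply Rmult_le_compat_l; lra).
      assert (x * S < Rabs c).
      { unfold x. replace (Rabs c / (Rabs c + S + 1) * S) with ((Rabs c * S) / (Rabs c + S + 1)) by (field; lra).
        apply (proj2 (Rlt_div_l (Rabs c * S) (Rabs c) (Rabs c + S + 1) ltac:(lra))); nra. }
      lra. }
    destruct j as [|j]; [rewrite coef_cons0; exact Hc|].
    rewrite coef_consS. apply IH. intros x Hx.
    pose proof (H x Hx) as Hz; simpl in Hz. rewrite Hc in Hz.
    apply Rmult_eq_reg_l with x; lra.
Qed.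

Fixpoint pr (a : Z -> R) (n : nat) : R :=
  match n with O => 1 | S k => pr a k * a (Z.of_nat (S k)) end.
Fixpoint sm (b : Z -> R) (n : nat) : R :=
  match n with O => 0 | S k => sm b k + b (Z.of_nat (S k)) end.

Lemma pr_pos a n : (forall z, 0 < a z) -> 0 < pr a n.
Proof. intro H; induction n; simpl; [lra| apply Rmult_lt_0_compat; auto]. Qed.

Definition ent := (list R * list R * list R * list R)%type.
Definition eA (e : ent) := fst (fst (fst e)).
Definition eB (e : ent) := snd (fst (fst e)).
Definition eC (e : ent) := snd (fst e).
Definition eD (e : ent) := snd e.

Fixpoint ents (a b : Z -> R) (n : nat) : ent :=
  match n with
  | O => ((1 :: nil), nil, nil, (1 :: nil))
  | S k => let e := ents a b k in
     let an := a (Z.of_nat (S k)) in let bn := b (Z.of_nat (S k)) in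
     (padd (padd (0 :: eA e) (pscale (- bn) (eA e))) (pscale (-1) (eC e)),
      padd (padd (0 :: eB e) (pscale (- bn) (eB e))) (pscale (-1) (eD e)),
      pscale (an ^ 2) (eA e), pscale (an ^ 2) (eB e))
  end.

Section ES.
Variables (a b : Z -> R) (k : nat).
Let an := a (Z.of_nat (S k)).
Let bn := b (Z.of_nat (S k)).
Let e := ents a b k.
Lemma eA_S : eA (ents a b (S k)) = padd (padd (0 :: eA e) (pscale (- bn) (eA e))) (pscale (-1) (eC e)).
Proof. reflexivity. Qed.
Lemma eB_S : eB (ents a b (S k)) = padd (padd (0 :: eB e) (pscale (- bn) (eB e))) (pscale (-1) (eD e)).
Proof. reflexivity. Qed.
Lemma eC_S : eC (ents a b (S k)) = pscale (an ^ 2) (eA e).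
Proof. reflexivity. Qed.
Lemma eD_S : eD (ents a b (S k)) = pscale (an ^ 2) (eB e).
Proof. reflexivity. Qed.
Lemma pr_S : pr a (S k) = pr a k * an.
Proof. reflexivity. Qed.
Lemma sm_S : sm b (S k) = sm b k + bn.
Proof. reflexivity. Qed.
End ES.

Lemma transfer_ents a b n x : (forall z, 0 < a z) ->
  transfer a b n x =
   (peval (eA (ents a b n)) x / pr a n, peval (eB (ents a b n)) x / pr a n,
    peval (eC (ents a b n)) x / pr a n, peval (eD (ents a b n)) x / pr a n).
Proof.
  intro Ha. induction n as [|k IH].
  - simpl. unfold mat2_id, eA, eB, eC, eD; simpl. f_equal; [f_equal; [f_equal|]|]; field.
  - change (transfer a b (S k) x) with (mat2_mul (Lambda a b (S k) x) (transfer a b k x)).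
    rewrite IH, eA_S, eB_S, eC_S, eD_S, pr_S.
    rewrite !peval_padd, !peval_pscale. unfold Lambda, mat2_mul. simpl peval.
    pose proof (pr_pos a k Ha). pose proof (Ha (Z.of_nat (S k))).
    f_equal; [f_equal; [f_equal|]|]; field; lra.
Qed.

Lemma disc_ents p a b x : (forall z, 0 < a z) ->
  discriminant p a b x = peval (padd (eA (ents a b p)) (eD (ents a b p))) x / pr a p.
Proof.
  intro Ha. unfold discriminant. rewrite transfer_ents by auto. simpl. rewrite peval_padd. field.
  pose proof (pr_pos a p Ha); lra.
Qed.

Lemma ents_coef a b n :
  (forall j, (n < j)%nat -> coef (eA (ents a b n)) j = 0) /\
  coef (eA (ents a b n)) n = 1 /\
  coef (0 :: eA (ents a b n)) n = - sm b n /\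
  (forall j, (n <= j)%nat -> coef (eB (ents a b n)) j = 0) /\
  (forall j, (n <= j)%nat -> coef (eC (ents a b n)) j = 0) /\
  (forall j, (n < j)%nat -> coef (eD (ents a b n)) j = 0).
Proof.
  induction n as [|k [HA1 [HA2 [HA3 [HB [HC HD]]]]]].
  - simpl. unfold eA, eB, eC, eD; simpl. repeat split.
    + intros [|j] Hj; [lia|]. rewrite coef_consS. apply coef_nil.
    + rewrite coef_cons0; ring.
    + intros; apply coef_nil.
    + intros; apply coef_nil.
    + intros [|j] Hj; [lia|]. rewrite coef_consS. apply coef_nil.
  - rewrite eA_S, eB_S, eC_S, eD_S. repeat split.
    + intros [|j] Hj; [lia|]. rewrite !coef_padd, !coef_pscale, coef_consS.
      rewrite HA1 by lia. rewrite (HA1 (S j)) by lia. rewrite HC by lia. ring.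
    + rewrite !coef_padd, !coef_pscale, coef_consS, HA2. rewrite HA1 by lia. rewrite HC by lia. ring.
    + rewrite coef_consS, !coef_padd, !coef_pscale, HA2, HC by lia. rewrite HA3, sm_S. ring.
    + intros [|j] Hj; [lia|]. rewrite !coef_padd, !coef_pscale, coef_consS.
      rewrite !HB by lia. rewrite HD by lia. ring.
    + intros j Hj. rewrite coef_pscale, HA1 by lia. ring.
    + intros j Hj. rewrite coef_pscale, HB by lia. ring.
Qed.

Lemma ents_coefD a b k j : (k <= j)%nat -> coef (eD (ents a b (S k))) j = 0.
Proof.
  intro Hj. rewrite eD_S, coef_pscale.
  destruct (ents_coef a b k) as [_ [_ [_ [HB _]]]]. rewrite HB by lia. ring.
Qed.

Lemma torus_invariants p a0 b0 a b : (1 <= p)%nat ->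
  periodic_jacobi p a0 b0 -> iso_torus p a0 b0 a b ->
  pr a p = pr a0 p /\ sm b p = sm b0 p.
Proof.
  intros Hp [_ [_ Ha0]] [[_ [_ Ha]] Hd].
  destruct p as [|k]; [lia|].
  set (L := padd (pscale (/ pr a (S k)) (padd (eA (ents a b (S k))) (eD (ents a b (S k)))))
                 (pscale (- / pr a0 (S k)) (padd (eA (ents a0 b0 (S k))) (eD (ents a0 b0 (S k)))))).
  assert (HL : forall j, coef L j = 0).
  { apply poly_zero. intros x _. unfold L. rewrite peval_padd, !peval_pscale.
    specialize (Hd x). rewrite !disc_ents in Hd by auto. unfold Rdiv in Hd. lra. }
  pose proof (pr_pos a (S k) Ha). pose proof (pr_pos a0 (S k) Ha0).
  assert (E1 : pr a (S k) = pr a0 (S k)).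
  { pose proof (HL (S k)) as Hc. unfold L in Hc. rewrite !coef_padd, !coef_pscale, !coef_padd in Hc.
    destruct (ents_coef a b (S k)) as [_ [A2 [_ [_ [_ D1]]]]].
    destruct (ents_coef a0 b0 (S k)) as [_ [A2' [_ [_ [_ D1']]]]].
    rewrite A2, A2' in Hc.
    rewrite (ents_coefD a b k (S k)), (ents_coefD a0 b0 k (S k)) in Hc by lia.
    apply Rmult_eq_reg_r with (/ pr a (S k) * / pr a0 (S k)).
    - replace (pr a (S k) * (/ pr a (S k) * / pr a0 (S k))) with (/ pr a0 (S k)) by (field; lra).
      replace (pr a0 (S k) * (/ pr a (S k) * / pr a0 (S k))) with (/ pr a (S k)) by (field; lra). lra.
    - apply Rmult_integral_contrapositive; split; apply Rinv_neq_0_compat; lra. }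
  split; [exact E1|].
  pose proof (HL k) as Hc. unfold L in Hc. rewrite !coef_padd, !coef_pscale, !coef_padd in Hc.
  destruct (ents_coef a b (S k)) as [_ [_ [A3 _]]].
  destruct (ents_coef a0 b0 (S k)) as [_ [_ [A3' _]]].
  rewrite coef_consS in A3, A3'. rewrite A3, A3' in Hc.
  rewrite (ents_coefD a b k k), (ents_coefD a0 b0 k k) in Hc by lia.
  rewrite <- E1 in Hc.
  apply Rmult_eq_reg_l with (/ pr a (S k)); [lra| apply Rinv_neq_0_compat; lra].
Qed.

Fixpoint fprod (f : nat -> R) (n : nat) : R :=
  match n with O => 1 | S k => fprod f k * f k end.

Lemma fprod_S_l f n : fprod f (S n) = f O * fprod (fun k => f (S k)) n.
Proof. induction n; simpl in *; [ring| rewrite IHn; ring]. Qed.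
Lemma fsum_S_l f n : fsum f (S n) = f O + fsum (fun k => f (S k)) n.
Proof. induction n; simpl in *; [ring| rewrite IHn; ring]. Qed.
Lemma fsum_ext f g n : (forall k, (k < n)%nat -> f k = g k) -> fsum f n = fsum g n.
Proof. induction n; intro H; simpl; [reflexivity| rewrite IHn by (intros; apply H; lia); rewrite H by lia; reflexivity]. Qed.
Lemma fprod_ext f g n : (forall k, (k < n)%nat -> f k = g k) -> fprod f n = fprod g n.
Proof. induction n; intro H; simpl; [reflexivity| rewrite IHn by (intros; apply H; lia); rewrite H by lia; reflexivity]. Qed.
Lemma fsum_le f g n : (forall k, (k < n)%nat -> f k <= g k) -> fsum f n <= fsum g n.
Proof. induction n; intro H; simpl; [lra| pose proof (H n ltac:(lia)); pose proof (IHn ltac:(intros; apply H; lia)); lra]. Qed.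
Lemma fsum_nonneg f n : (forall k, (k < n)%nat -> 0 <= f k) -> 0 <= fsum f n.
Proof. induction n; intro H; simpl; [lra| pose proof (H n ltac:(lia)); pose proof (IHn ltac:(intros; apply H; lia)); lra]. Qed.
Lemma fsum_term f n k : (forall k, (k < n)%nat -> 0 <= f k) -> (k < n)%nat -> f k <= fsum f n.
Proof.
  induction n; intros H Hk; [lia|]. simpl.
  pose proof (fsum_nonneg f n ltac:(intros; apply H; lia)).
  destruct (Nat.eq_dec k n) as [->|Hne]; [lra|].
  pose proof (IHn ltac:(intros; apply H; lia) ltac:(lia)). pose proof (H n ltac:(lia)). lra.
Qed.
Lemma fsum_plus f g n : fsum (fun k => f k + g k) n = fsum f n + fsum g n.
Proof. induction n; simpl; [ring| rewrite IHn; ring]. Qed.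
Lemma fsum_scal c f n : fsum (fun k => c * f k) n = c * fsum f n.
Proof. induction n; simpl; [ring| rewrite IHn; ring]. Qed.
Lemma fsum_mono f n m : (forall k, 0 <= f k) -> (n <= m)%nat -> fsum f n <= fsum f m.
Proof.
  intros H Hnm. induction Hnm; [lra|]. simpl. pose proof (H m). lra.
Qed.

Lemma fprod_bounds x n U : (forall k, (k < n)%nat -> 0 <= x k <= U) ->
  0 <= fprod x n <= U ^ n.
Proof.
  induction n; intro H; simpl; [lra|].
  destruct (IHn ltac:(intros; apply H; lia)). destruct (H n ltac:(lia)).
  split; [nra|]. rewrite Rmult_comm. apply Rmult_le_compat; lra.
Qed.
Lemma fprod_lower x n l : 0 < l -> (forall k, (k < n)%nat -> l <= x k) -> l ^ n <= fprod x n.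
Proof.
  intro Hl; induction n; intro H; simpl; [lra|].
  pose proof (IHn ltac:(intros; apply H; lia)). pose proof (H n ltac:(lia)).
  rewrite Rmult_comm. apply Rmult_le_compat; try lra. apply pow_le; lra.
Qed.
Lemma fprod_lip x y n U : 1 <= U -> (forall k, (k < n)%nat -> 0 <= x k <= U /\ 0 <= y k <= U) ->
  Rabs (fprod x n - fprod y n) <= U ^ n * fsum (fun k => Rabs (x k - y k)) n.
Proof.
  intro HU; induction n; intro H; simpl.
  - rewrite Rminus_diag, Rabs_R0; lra.
  - pose proof (IHn ltac:(intros; apply H; lia)) as IH.
    destruct (H n ltac:(lia)) as [[Hx1 Hx2] [Hy1 Hy2]].
    destruct (fprod_bounds x n U ltac:(intros; apply H; lia)) as [Px1 Px2].
    replace (fprod x n * x n - fprod y n * y n) with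
      (fprod x n * (x n - y n) + (fprod x n - fprod y n) * y n) by ring.
    eapply Rle_trans; [apply Rabs_triang|]. rewrite !Rabs_mult.
    rewrite (Rabs_pos_eq (fprod x n)), (Rabs_pos_eq (y n)) by lra.
    pose proof (Rabs_pos (x n - y n)). pose proof (Rabs_pos (fprod x n - fprod y n)).
    assert (fprod x n * Rabs (x n - y n) <= U ^ n * Rabs (x n - y n)) by (apply Rmult_le_compat_r; lra).
    assert (Rabs (fprod x n - fprod y n) * y n <= U ^ n * fsum (fun k => Rabs (x k - y k)) n * U)
      by (apply Rmult_le_compat; lra).
    assert (Hs : 0 <= fsum (fun k => Rabs (x k - y k)) n) by (apply fsum_nonneg; intros; apply Rabs_pos).
    assert (1 <= U ^ n) by (apply pow_R1_Rle; lra).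
    assert (U ^ n * Rabs (x n - y n) <= U * U ^ n * Rabs (x n - y n)) by
      (apply Rmult_le_compat_r; [lra| nra]).
    nra.
Qed.

Lemma per_shift (p : nat) (f : Z -> R) : (forall z, f (z + Z.of_nat p)%Z = f z) ->
  forall z q, f (z + Z.of_nat p * q)%Z = f z.
Proof.
  intros H.
  assert (Hn : forall n z, f (z + Z.of_nat p * Z.of_nat n)%Z = f z).
  { induction n; intro z.
    - f_equal; lia.
    - replace (z + Z.of_nat p * Z.of_nat (S n))%Z with ((z + Z.of_nat p * Z.of_nat n) + Z.of_nat p)%Z by lia.
      rewrite H; apply IHn. }
  intros z q. destruct (Z_le_gt_dec 0 q).
  - replace q with (Z.of_nat (Z.to_nat q)) by lia. apply Hn.
  - rewrite <- (Hn (Z.to_nat (- q)) (z + Z.of_nat p * q)%Z). f_equal. lia.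
Qed.

Lemma per_reduce (p : nat) (w : nat) (z : Z) : (1 <= p)%nat ->
  exists k q, (k < p)%nat /\ z = (Z.of_nat (w + 1 + k) + Z.of_nat p * q)%Z.
Proof.
  intro Hp. set (P := Z.of_nat p). set (d := (z - Z.of_nat (w + 1))%Z).
  assert (HP : (0 < P)%Z) by (unfold P; lia).
  pose proof (Z.div_mod d P ltac:(lia)). pose proof (Z.mod_pos_bound d P HP).
  exists (Z.to_nat (d mod P)), (d / P)%Z. split; [lia|]. unfold d, P in *. lia.
Qed.

Definition good (p : nat) (pi sg : R) (a1 b1 : Z -> R) : Prop :=
  (forall z, a1 (z + Z.of_nat p)%Z = a1 z) /\ (forall z, b1 (z + Z.of_nat p)%Z = b1 z) /\
  (forall z, 0 < a1 z) /\
  (forall w : nat, fprod (fun k => a1 (Z.of_nat (w + k))) p = pi) /\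
  (forall w : nat, fsum (fun k => b1 (Z.of_nat (w + k))) p = sg).

Lemma window_prod p (a1 : Z -> R) : (forall z, a1 (z + Z.of_nat p)%Z = a1 z) -> (forall z, 0 < a1 z) ->
  forall w, fprod (fun k => a1 (Z.of_nat (w + k))) p = fprod (fun k => a1 (Z.of_nat (1 + k))) p.
Proof.
  intros Hper Hpos.
  assert (Hs : forall w, fprod (fun k => a1 (Z.of_nat (S w + k))) p = fprod (fun k => a1 (Z.of_nat (w + k))) p).
  { intro w. apply Rmult_eq_reg_l with (a1 (Z.of_nat w)); [| apply Rgt_not_eq, Hpos].
    pose proof (fprod_S_l (fun k => a1 (Z.of_nat (w + k))) p) as E. simpl in E.
    rewrite Nat.add_0_r in E.
    rewrite (fprod_ext (fun k => a1 (Z.of_nat (S w + k))) (fun k => a1 (Z.of_nat (w + S k)))) by (intros; f_equal; lia).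
    rewrite <- E. rewrite Rmult_comm. f_equal.
    replace (Z.of_nat (w + p)) with (Z.of_nat w + Z.of_nat p)%Z by lia. apply Hper. }
  induction w.
  - destruct p as [|p']; [reflexivity|].
    rewrite <- (Hs 0%nat). reflexivity.
  - destruct w as [|w]; [reflexivity|]. rewrite Hs. apply IHw.
Qed.

Lemma window_sum p (b1 : Z -> R) : (forall z, b1 (z + Z.of_nat p)%Z = b1 z) ->
  forall w, fsum (fun k => b1 (Z.of_nat (w + k))) p = fsum (fun k => b1 (Z.of_nat (1 + k))) p.
Proof.
  intros Hper.
  assert (Hs : forall w, fsum (fun k => b1 (Z.of_nat (S w + k))) p = fsum (fun k => b1 (Z.of_nat (w + k))) p).
  { intro w. apply Rplus_eq_reg_l with (b1 (Z.of_nat w)).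
    pose proof (fsum_S_l (fun k => b1 (Z.of_nat (w + k))) p) as E. simpl in E.
    rewrite Nat.add_0_r in E.
    rewrite (fsum_ext (fun k => b1 (Z.of_nat (S w + k))) (fun k => b1 (Z.of_nat (w + S k)))) by (intros; f_equal; lia).
    rewrite <- E. rewrite Rplus_comm. f_equal.
    replace (Z.of_nat (w + p)) with (Z.of_nat w + Z.of_nat p)%Z by lia. apply Hper. }
  induction w.
  - destruct p as [|p']; [reflexivity|].
    rewrite <- (Hs 0%nat). reflexivity.
  - destruct w as [|w]; [reflexivity|]. rewrite Hs. apply IHw.
Qed.

Lemma pr_fprod a n : pr a n = fprod (fun k => a (Z.of_nat (1 + k))) n.
Proof. induction n; simpl; [reflexivity| rewrite IHn; reflexivity]. Qed.
Lemma sm_fsum b n : sm b n = fsum (fun k => b (Z.of_nat (1 + k))) n.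
Proof. induction n; simpl; [reflexivity| rewrite IHn; reflexivity]. Qed.

Lemma torus_good p a0 b0 a1 b1 : (1 <= p)%nat -> periodic_jacobi p a0 b0 ->
  iso_torus p a0 b0 a1 b1 -> good p (pr a0 p) (sm b0 p) a1 b1.
Proof.
  intros Hp H0 HT. destruct (torus_invariants p a0 b0 a1 b1 Hp H0 HT) as [E1 E2].
  destruct HT as [[Ha [Hb Hpos]] _].
  repeat split; auto.
  - intro w. rewrite window_prod by auto. rewrite <- pr_fprod. exact E1.
  - intro w. rewrite window_sum by auto. rewrite <- sm_fsum. exact E2.
Qed.

Lemma tri3 u x y : Rabs (x - y) <= Rabs (u - x) + Rabs (u - y).
Proof.
  replace (x - y) with ((u - y) - (u - x)) by ring.
  eapply Rle_trans; [apply Rabs_triang|]. rewrite Rabs_Ropp. lra.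
Qed.
Lemma fsum_abs f n : Rabs (fsum f n) <= fsum (fun k => Rabs (f k)) n.
Proof.
  induction n; simpl; [rewrite Rabs_R0; lra|].
  eapply Rle_trans; [apply Rabs_triang| lra].
Qed.
Lemma fsum_minus f g n : fsum (fun k => f k - g k) n = fsum f n - fsum g n.
Proof. induction n; simpl; [ring| rewrite IHn; ring]. Qed.

Lemma jdiff_nonneg a b a1 b1 n : 0 <= jdiff a b a1 b1 n.
Proof. unfold jdiff. pose proof (Rabs_pos (a n - a1 (Z.of_nat n))). pose proof (Rabs_pos (b n - b1 (Z.of_nat n))). lra. Qed.

Definition Lc (p : nat) (pi eps : R) : R :=
  2 + 4 / eps ^ 2 + pi * (/ eps + eps + 1) ^ (Nat.pred p) / ((eps / 2) ^ (Nat.pred p)) ^ 2.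

Lemma Lc_ge1 p pi eps : 0 < pi -> 0 < eps -> 2 <= Lc p pi eps.
Proof.
  intros Hpi He. unfold Lc.
  assert (0 < / eps) by (apply Rinv_0_lt_compat; lra).
  assert (0 <= 4 / eps ^ 2) by (apply Rmult_le_pos; [lra| left; apply Rinv_0_lt_compat, pow_lt; lra]).
  assert (0 <= pi * (/ eps + eps + 1) ^ Nat.pred p / ((eps / 2) ^ Nat.pred p) ^ 2).
  { apply Rmult_le_pos; [apply Rmult_le_pos; [lra| apply pow_le; lra]|].
    left; apply Rinv_0_lt_compat, pow_lt, pow_lt; lra. }
  lra.
Qed.

Lemma glue p pi sg eps (a b : nat -> R) a1 b1 a2 b2 w :
  (1 <= p)%nat -> 0 < pi -> 0 < eps ->
  (forall n, (1 <= n)%nat -> eps < a n < / eps) ->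
  good p pi sg a1 b1 -> good p pi sg a2 b2 -> (1 <= w)%nat ->
  forall z, Rabs (a1 z - a2 z) + Rabs (b1 z - b2 z) <=
    Lc p pi eps * (fsum (fun k => jdiff a b a1 b1 (w + k)) p +
                   fsum (fun k => jdiff a b a2 b2 (w + 1 + k)) p).
Proof.
  intros Hp Hpi He Hab [Pa1 [Pb1 [Pos1 [W1 S1]]]] [Pa2 [Pb2 [Pos2 [W2 S2]]]] Hw z.
  set (d1 := fsum (fun k => jdiff a b a1 b1 (w + k)) p).
  set (d2 := fsum (fun k => jdiff a b a2 b2 (w + 1 + k)) p).
  assert (Hd1 : 0 <= d1) by (apply fsum_nonneg; intros; apply jdiff_nonneg).
  assert (Hd2 : 0 <= d2) by (apply fsum_nonneg; intros; apply jdiff_nonneg).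
  pose proof (Lc_ge1 p pi eps Hpi He) as HL.
  destruct (per_reduce p w z Hp) as [k [q [Hk ->]]].
  rewrite (per_shift p a1 Pa1), (per_shift p a2 Pa2), (per_shift p b1 Pb1), (per_shift p b2 Pb2).
  destruct p as [|p']; [lia|].
  assert (J1 : forall j, (j <= p')%nat -> jdiff a b a1 b1 (w + j) <= d1).
  { intros j Hj. apply (fsum_term (fun k => jdiff a b a1 b1 (w + k))); [intros; apply jdiff_nonneg| lia]. }
  assert (J2 : forall j, (j <= p')%nat -> jdiff a b a2 b2 (w + 1 + j) <= d2).
  { intros j Hj. apply (fsum_term (fun k => jdiff a b a2 b2 (w + 1 + k))); [intros; apply jdiff_nonneg| lia]. }
  assert (Ov : fsum (fun j => jdiff a b a1 b1 (w + 1 + j) + jdiff a b a2 b2 (w + 1 + j)) p' <= d1 + d2).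
  { rewrite fsum_plus. unfold d1, d2. rewrite (fsum_S_l (fun k => jdiff a b a1 b1 (w + k))).
    rewrite (fsum_ext (fun k => jdiff a b a1 b1 (w + S k)) (fun j => jdiff a b a1 b1 (w + 1 + j))) by (intros; f_equal; lia).
    change (fsum (fun k => jdiff a b a2 b2 (w + 1 + k)) (S p')) with
      (fsum (fun k => jdiff a b a2 b2 (w + 1 + k)) p' + jdiff a b a2 b2 (w + 1 + p')).
    pose proof (jdiff_nonneg a b a1 b1 (w + 0)). pose proof (jdiff_nonneg a b a2 b2 (w + 1 + p')). lra. }
  assert (Tri : forall n, Rabs (a1 (Z.of_nat n) - a2 (Z.of_nat n)) <= jdiff a b a1 b1 n + jdiff a b a2 b2 n /\
                          Rabs (b1 (Z.of_nat n) - b2 (Z.of_nat n)) <= jdiff a b a1 b1 n + jdiff a b a2 b2 n).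
  { intro n. unfold jdiff. pose proof (tri3 (a n) (a1 (Z.of_nat n)) (a2 (Z.of_nat n))).
    pose proof (tri3 (b n) (b1 (Z.of_nat n)) (b2 (Z.of_nat n))).
    pose proof (Rabs_pos (a n - a1 (Z.of_nat n))). pose proof (Rabs_pos (b n - b1 (Z.of_nat n))).
    pose proof (Rabs_pos (a n - a2 (Z.of_nat n))). pose proof (Rabs_pos (b n - b2 (Z.of_nat n))). lra. }
  assert (SumA : fsum (fun j => Rabs (a1 (Z.of_nat (w + 1 + j)) - a2 (Z.of_nat (w + 1 + j)))) p' <= d1 + d2).
  { eapply Rle_trans; [| exact Ov]. apply fsum_le. intros j _. apply Tri. }
  assert (SumB : fsum (fun j => Rabs (b1 (Z.of_nat (w + 1 + j)) - b2 (Z.of_nat (w + 1 + j)))) p' <= d1 + d2).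
  { eapply Rle_trans; [| exact Ov]. apply fsum_le. intros j _. apply Tri. }
  destruct (Nat.eq_dec k p') as [->|Hkp].
  2:{ (* overlap index *)
    destruct (Tri (w + 1 + k)%nat) as [T1 T2].
    pose proof (J1 (S k) ltac:(lia)) as X1. replace (w + S k)%nat with (w + 1 + k)%nat in X1 by lia.
    pose proof (J2 k ltac:(lia)) as X2.
    assert (0 <= (Lc (S p') pi eps - 2) * (d1 + d2)) by (apply Rmult_le_pos; lra).
    lra. }
  set (n := (w + 1 + p')%nat).
  assert (Bb : Rabs (b1 (Z.of_nat n) - b2 (Z.of_nat n)) <= d1 + d2).
  { pose proof (S1 (w + 1)%nat) as E1. pose proof (S2 (w + 1)%nat) as E2. simpl in E1, E2.
    assert (b1 (Z.of_nat n) - b2 (Z.of_nat n) =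
            fsum (fun j => b2 (Z.of_nat (w + 1 + j)) - b1 (Z.of_nat (w + 1 + j))) p') as ->.
    { rewrite fsum_minus. unfold n. lra. }
    eapply Rle_trans; [apply fsum_abs|].
    eapply Rle_trans; [| exact SumB]. right. apply fsum_ext. intros. rewrite <- Rabs_Ropp. f_equal; ring. }
  assert (Aa : Rabs (a1 (Z.of_nat n) - a2 (Z.of_nat n)) <= (Lc (S p') pi eps - 1) * (d1 + d2)).
  { set (P1 := fprod (fun j => a1 (Z.of_nat (w + 1 + j))) p').
    set (P2 := fprod (fun j => a2 (Z.of_nat (w + 1 + j))) p').
    pose proof (W1 (w + 1)%nat) as E1. pose proof (W2 (w + 1)%nat) as E2. simpl in E1, E2.
    fold P1 in E1. fold P2 in E2. fold n in E1, E2.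
    pose proof (Pos1 (Z.of_nat n)). pose proof (Pos2 (Z.of_nat n)).
    destruct (Rle_lt_dec (d1 + d2) (eps / 2)) as [Hsm|Hlg].
    - set (l := eps / 2). set (U := / eps + eps + 1).
      assert (He' : 0 < / eps) by (apply Rinv_0_lt_compat; lra).
      assert (Rng : forall j, (j < p')%nat ->
         l <= a1 (Z.of_nat (w + 1 + j)) <= U /\ l <= a2 (Z.of_nat (w + 1 + j)) <= U).
      { intros j Hj. pose proof (Hab (w + 1 + j)%nat ltac:(lia)).
        pose proof (J1 (S j) ltac:(lia)) as X1. replace (w + S j)%nat with (w + 1 + j)%nat in X1 by lia.
        pose proof (J2 j ltac:(lia)) as X2. unfold jdiff in X1, X2.
        pose proof (Rabs_pos (b (w + 1 + j)%nat - b1 (Z.of_nat (w + 1 + j)))).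
        pose proof (Rabs_pos (b (w + 1 + j)%nat - b2 (Z.of_nat (w + 1 + j)))).
        set (u := a (w + 1 + j)%nat) in *.
        assert (Ra1 : Rabs (u - a1 (Z.of_nat (w + 1 + j))) <= eps / 2) by lra.
        assert (Ra2 : Rabs (u - a2 (Z.of_nat (w + 1 + j))) <= eps / 2) by lra.
        apply Rabs_le_between in Ra1. apply Rabs_le_between in Ra2. unfold l, U. lra. }
      assert (Hl : 0 < l) by (unfold l; lra).
      assert (LP1 : l ^ p' <= P1) by (apply fprod_lower; [lra| intros; apply Rng; auto]).
      assert (LP2 : l ^ p' <= P2) by (apply fprod_lower; [lra| intros; apply Rng; auto]).
      assert (Hlp : 0 < l ^ p') by (apply pow_lt; lra).
      assert (Lip : Rabs (P1 - P2) <= U ^ p' * (d1 + d2)).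
      { eapply Rle_trans; [apply (fprod_lip _ _ p' U)|].
        - unfold U; lra.
        - intros j Hj. destruct (Rng j Hj). lra.
        - apply Rmult_le_compat_l; [apply pow_le; unfold U; lra| exact SumA]. }
      assert (a1 (Z.of_nat n) = pi / P1) as -> by (field_simplify_eq; [lra| lra]).
      assert (a2 (Z.of_nat n) = pi / P2) as -> by (field_simplify_eq; [lra| lra]).
      replace (pi / P1 - pi / P2) with (pi * (P2 - P1) * / (P1 * P2)) by (field; lra).
      rewrite Rabs_mult, Rabs_mult, (Rabs_pos_eq pi), (Rabs_pos_eq (/ (P1 * P2))) by
        (try lra; left; apply Rinv_0_lt_compat; nra).
      rewrite <- Rabs_Ropp, Ropp_minus_distr.
      unfold Lc. simpl Nat.pred. fold l U.
      assert (/ (P1 * P2) <= / ((l ^ p') ^ 2)).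
      { apply Rinv_le_contravar; [apply pow_lt; lra| simpl; rewrite Rmult_1_r; apply Rmult_le_compat; lra]. }
      assert (0 <= 4 / eps ^ 2) by (apply Rmult_le_pos; [lra| left; apply Rinv_0_lt_compat, pow_lt; lra]).
      assert (0 <= / (P1 * P2)) by (left; apply Rinv_0_lt_compat; nra).
      pose proof (Rabs_pos (P1 - P2)).
      assert (pi * Rabs (P1 - P2) * / (P1 * P2) <= pi * (U ^ p' * (d1 + d2)) * / ((l ^ p') ^ 2)).
      { apply Rmult_le_compat; try lra. apply Rmult_le_pos; lra. apply Rmult_le_compat_l; lra. }
      assert (pi * (U ^ p' * (d1 + d2)) * / ((l ^ p') ^ 2) = pi * U ^ p' / (l ^ p') ^ 2 * (d1 + d2)) by (unfold Rdiv; ring).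
      assert (0 <= 1 + 4 / eps ^ 2) by lra.
      nra.
    - pose proof (Hab w Hw). pose proof (Hab n ltac:(unfold n; lia)).
      pose proof (J1 0%nat ltac:(lia)) as X1. rewrite Nat.add_0_r in X1.
      pose proof (J2 p' ltac:(lia)) as X2. fold n in X2. unfold jdiff in X1, X2.
      assert (a1 (Z.of_nat n) = a1 (Z.of_nat w)) as ->.
      { unfold n. replace (Z.of_nat (w + 1 + p')) with (Z.of_nat w + Z.of_nat (S p'))%Z by lia. apply Pa1. }
      pose proof (Pos1 (Z.of_nat w)).
      pose proof (Rabs_pos (b w - b1 (Z.of_nat w))). pose proof (Rabs_pos (b n - b2 (Z.of_nat n))).
      pose proof (Rle_abs (a1 (Z.of_nat w) - a w)) as R1. rewrite Rabs_minus_sym in R1.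
      pose proof (Rle_abs (a2 (Z.of_nat n) - a n)) as R2. rewrite Rabs_minus_sym in R2.
      assert (Rabs (a1 (Z.of_nat w) - a2 (Z.of_nat n)) <= a1 (Z.of_nat w) + a2 (Z.of_nat n)).
      { apply Rabs_le; lra. }
      assert (He' : 0 < / eps) by (apply Rinv_0_lt_compat; lra).
      assert (2 / eps <= 4 / eps ^ 2 * (d1 + d2)).
      { replace (2 / eps) with (4 / eps ^ 2 * (eps / 2)) by (field; lra).
        apply Rmult_le_compat_l; [apply Rmult_le_pos; [lra| left; apply Rinv_0_lt_compat, pow_lt; lra]| lra]. }
      set (X := pi * (/ eps + eps + 1) ^ Nat.pred (S p') / ((eps / 2) ^ Nat.pred (S p')) ^ 2).
      assert (0 <= X * (d1 + d2)).
      { apply Rmult_le_pos; [| lra]. apply Rmult_le_pos; [apply Rmult_le_pos; [lra| apply pow_le; lra]|].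
        left; apply Rinv_0_lt_compat, pow_lt, pow_lt; lra. }
      assert (EL : (Lc (S p') pi eps - 1) * (d1 + d2) = (d1 + d2) + 4 / eps ^ 2 * (d1 + d2) + X * (d1 + d2))
        by (unfold Lc, X; ring).
      rewrite EL. unfold Rdiv in *. lra. }
  fold n. lra.
Qed.

From Stdlib Require Import ClassicalEpsilon Classical.

Lemma exp_le x y : x <= y -> exp x <= exp y.
Proof. intro H; destruct (Rle_lt_or_eq_dec x y H) as [h| ->]; [left; apply exp_increasing; exact h| lra]. Qed.

Lemma exp_mult_nat k x : exp (INR k * x) = exp x ^ k.
Proof.
  induction k; simpl pow. - rewrite Rmult_0_l, exp_0; reflexivity.
  - rewrite S_INR, Rmult_plus_distr_r, Rmult_1_l, exp_plus, IHk; ring.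
Qed.

Lemma fsum_const c n : fsum (fun _ => c) n = c * INR n.
Proof. induction n; simpl fsum; [simpl; ring| rewrite IHn, S_INR; ring]. Qed.

Lemma Series_nonneg' u : (forall n, 0 <= u n) -> 0 <= Series u.
Proof.
  intro H. unfold Series.
  assert (Rbar_le 0 (Lim_seq (sum_n u))).
  { rewrite <- (Lim_seq_const 0). apply Lim_seq_le_loc. exists O. intros n _.
    induction n; [rewrite sum_O; apply H| rewrite sum_Sn; pose proof (H (S n)); unfold plus; simpl; lra]. }
  destruct (Lim_seq (sum_n u)); simpl in *; lra.
Qed.

Lemma glb_props (E : R -> Prop) x0 : E x0 -> (forall x, E x -> 0 <= x) ->
  Glb_Rbar E = Finite (real (Glb_Rbar E)) /\ 0 <= real (Glb_Rbar E) /\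
  (forall x, E x -> real (Glb_Rbar E) <= x) /\
  (forall t, 0 < t -> exists x, E x /\ x <= real (Glb_Rbar E) + t) /\
  (forall y, (forall x, E x -> y <= x) -> y <= real (Glb_Rbar E)).
Proof.
  intros H0 Hpos. destruct (Glb_Rbar_correct E) as [Hlb Hgr].
  assert (Z : Rbar_le 0 (Glb_Rbar E)) by (apply Hgr; intros x Hx; simpl; apply Hpos; auto).
  pose proof (Hlb x0 H0) as U.
  destruct (Glb_Rbar E) as [g| |] eqn:Eg; simpl in Z, U; try contradiction.
  simpl. split; [reflexivity|]. split; [exact Z|]. split.
  { intros x Hx. pose proof (Hlb x Hx). simpl in H. exact H. }
  split.
  - intros t Ht. apply NNPP. intro Hn.
    assert (Rbar_le (g + t) g).
    { apply Hgr. intros x Hx. simpl. destruct (Rle_lt_dec x (g + t)) as [h|h]; [|lra].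
      exfalso; apply Hn; exists x; auto. }
    simpl in H; lra.
  - intros y Hy. assert (Rbar_le y g) by (apply Hgr; intros x Hx; simpl; auto). exact H.
Qed.

Lemma torus_self p a0 b0 : periodic_jacobi p a0 b0 -> iso_torus p a0 b0 a0 b0.
Proof. intro H; split; auto. Qed.

Lemma d_m_nonneg a b a' b' m : 0 <= d_m a b a' b' m.
Proof. apply Series_nonneg'. intro n. apply Rmult_le_pos; [left; apply exp_pos| apply jdiff_nonneg]. Qed.
Lemma dt_m_nonneg p a b a' b' m : 0 <= dt_m p a b a' b' m.
Proof. apply fsum_nonneg. intros; apply jdiff_nonneg. Qed.

Lemma dt_glb p a0 b0 a b m : periodic_jacobi p a0 b0 ->
  let E := (fun r : R => exists a' b' : Z -> R, iso_torus p a0 b0 a' b' /\ r = dt_m p a b a' b' m) in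
  Glb_Rbar E = Finite (real (Glb_Rbar E)) /\ 0 <= real (Glb_Rbar E) /\
  (forall x, E x -> real (Glb_Rbar E) <= x) /\
  (forall t, 0 < t -> exists x, E x /\ x <= real (Glb_Rbar E) + t) /\
  (forall y, (forall x, E x -> y <= x) -> y <= real (Glb_Rbar E)).
Proof.
  intros H0 E. apply (glb_props E (dt_m p a b a0 b0 m)).
  - exists a0, b0; split; [apply torus_self; auto| reflexivity].
  - intros x [a' [b' [_ ->]]]. apply dt_m_nonneg.
Qed.
Lemma d_glb p a0 b0 a b m : periodic_jacobi p a0 b0 ->
  let E := (fun r : R => exists a' b' : Z -> R, iso_torus p a0 b0 a' b' /\ r = d_m a b a' b' m) in
  Glb_Rbar E = Finite (real (Glb_Rbar E)) /\ 0 <= real (Glb_Rbar E) /\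
  (forall x, E x -> real (Glb_Rbar E) <= x) /\
  (forall t, 0 < t -> exists x, E x /\ x <= real (Glb_Rbar E) + t) /\
  (forall y, (forall x, E x -> y <= x) -> y <= real (Glb_Rbar E)).
Proof.
  intros H0 E. apply (glb_props E (d_m a b a0 b0 m)).
  - exists a0, b0; split; [apply torus_self; auto| reflexivity].
  - intros x [a' [b' [_ ->]]]. apply d_m_nonneg.
Qed.

Definition qh : R := exp (- / 2).
Lemma qh_bounds : 0 < qh < 1.
Proof. unfold qh. split; [apply exp_pos|]. rewrite <- exp_0. apply exp_increasing. lra. Qed.

Definition C1 (p : nat) (pi eps : R) : R := 4 * (1 + 2 * Lc p pi eps) / (1 - qh).

Lemma chain p a0 b0 eps (a b : nat -> R) m Y :
  (1 <= p)%nat -> periodic_jacobi p a0 b0 -> 0 < eps ->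
  (forall n, (1 <= n)%nat -> eps < a n < / eps) ->
  (1 <= m)%nat -> 0 <= Y ->
  (forall i, dt_torus p a0 b0 a b (m + i) <= Y * exp (INR i / 4)) ->
  d_torus p a0 b0 a b m <= C1 p (pr a0 p) eps * Y.
Proof.
  intros Hp H0 He Hab Hm HY HdY.
  set (pi := pr a0 p). set (L := Lc p pi eps).
  assert (Hpi : 0 < pi) by (apply pr_pos; apply H0).
  assert (HL : 2 <= L) by (apply Lc_ge1; auto).
  pose proof qh_bounds as Hq.
  assert (HC1 : 0 < C1 p pi eps).
  { unfold C1. fold L. apply Rdiv_lt_0_compat; lra. }
  assert (Key : forall th, 0 < th -> d_torus p a0 b0 a b m <= C1 p pi eps * (Y + th)).
  { intros th Hth.
    assert (HT : forall i, {T : (Z -> R) * (Z -> R) | iso_torus p a0 b0 (fst T) (snd T) /\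
               dt_m p a b (fst T) (snd T) (m + i) <= dt_torus p a0 b0 a b (m + i) + th}).
    { intro i. apply constructive_indefinite_description.
      destruct (dt_glb p a0 b0 a b (m + i) H0) as [_ [_ [_ [G4 _]]]].
      destruct (G4 th Hth) as [x [[a' [b' [HT ->]]] Hx]].
      exists (a', b'). simpl. split; auto. }
    set (A := fun i => fst (proj1_sig (HT i))). set (B := fun i => snd (proj1_sig (HT i))).
    assert (HTi : forall i, iso_torus p a0 b0 (A i) (B i) /\
               dt_m p a b (A i) (B i) (m + i) <= dt_torus p a0 b0 a b (m + i) + th).
    { intro i. unfold A, B. apply (proj2_sig (HT i)). }
    set (dl := fun i => dt_m p a b (A i) (B i) (m + i)).
    assert (Hdl : forall i, dl i <= (Y + th) * exp (INR i / 4)).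
    { intro i. unfold dl. destruct (HTi i) as [_ h]. pose proof (HdY i).
      assert (1 <= exp (INR i / 4)) by (rewrite <- exp_0; apply exp_le; pose proof (pos_INR i); lra).
      nra. }
    assert (Hdl0 : forall i, 0 <= dl i) by (intro; apply dt_m_nonneg).
    assert (Hgood : forall i, good p pi (sm b0 p) (A i) (B i)).
    { intro i. apply torus_good; auto. apply HTi. }
    assert (Glue : forall i z, Rabs (A i z - A (S i) z) + Rabs (B i z - B (S i) z) <= L * (dl i + dl (S i))).
    { intros i z. unfold L.
      replace (dl (S i)) with (fsum (fun k => jdiff a b (A (S i)) (B (S i)) (m + i + 1 + k)) p).
      - apply (glue p pi (sm b0 p) eps a b); auto; lia.
      - unfold dl, dt_m. apply fsum_ext. intros; f_equal; lia. }
    assert (Ch : forall k n, jdiff a b (A 0%nat) (B 0%nat) n <= jdiff a b (A k) (B k) n +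
       fsum (fun i => Rabs (A i (Z.of_nat n) - A (S i) (Z.of_nat n)) + Rabs (B i (Z.of_nat n) - B (S i) (Z.of_nat n))) k).
    { induction k; intro n; simpl fsum; [lra|].
      pose proof (IHk n). unfold jdiff in *.
      pose proof (Rabs_triang (a n - A (S k) (Z.of_nat n)) (A (S k) (Z.of_nat n) - A k (Z.of_nat n))).
      pose proof (Rabs_triang (b n - B (S k) (Z.of_nat n)) (B (S k) (Z.of_nat n) - B k (Z.of_nat n))).
      replace (a n - A (S k) (Z.of_nat n) + (A (S k) (Z.of_nat n) - A k (Z.of_nat n))) with (a n - A k (Z.of_nat n)) in H1 by ring.
      replace (b n - B (S k) (Z.of_nat n) + (B (S k) (Z.of_nat n) - B k (Z.of_nat n))) with (b n - B k (Z.of_nat n)) in H2 by ring.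
      rewrite (Rabs_minus_sym (A (S k) _)) in H1. rewrite (Rabs_minus_sym (B (S k) _)) in H2. lra. }
    set (K0 := 4 * (1 + 2 * L)).
    assert (Term : forall k, jdiff a b (A 0%nat) (B 0%nat) (m + k) <= K0 * (Y + th) * exp (INR k / 2)).
    { intro k. pose proof (Ch k (m + k)%nat) as C.
      assert (X1 : jdiff a b (A k) (B k) (m + k) <= dl k).
      { unfold dl, dt_m. rewrite <- (Nat.add_0_r (m + k)) at 1.
        apply (fsum_term (fun j => jdiff a b (A k) (B k) (m + k + j))); [intros; apply jdiff_nonneg| lia]. }
      set (e := exp (INR k / 4)).
      assert (He1 : 1 <= e) by (unfold e; rewrite <- exp_0; apply exp_le; pose proof (pos_INR k); lra).
      assert (X2 : fsum (fun i => Rabs (A i (Z.of_nat (m + k)) - A (S i) (Z.of_nat (m + k))) +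
                 Rabs (B i (Z.of_nat (m + k)) - B (S i) (Z.of_nat (m + k)))) k <= (2 * L * (Y + th) * e) * INR k).
      { rewrite <- fsum_const. apply fsum_le. intros i Hi. eapply Rle_trans; [apply Glue|].
        pose proof (Hdl i). pose proof (Hdl (S i)).
        assert (exp (INR i / 4) <= e) by (unfold e; apply exp_le; apply le_INR in Hi; rewrite S_INR in Hi; lra).
        assert (exp (INR (S i) / 4) <= e) by (unfold e; apply exp_le; apply le_INR in Hi; lra).
        assert (dl i + dl (S i) <= 2 * (Y + th) * e) by nra.
        nra. }
      pose proof (Hdl k) as X3. fold e in X3.
      assert (Hk4 : INR k + 1 <= 4 * e).
      { unfold e. pose proof (exp_ineq1_le (INR k / 4)). lra. }
      assert (Hexp : exp (INR k / 2) = e * e) by (unfold e; rewrite <- exp_plus; f_equal; lra).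
      rewrite Hexp. unfold K0.
      pose proof (pos_INR k).
      assert (jdiff a b (A 0%nat) (B 0%nat) (m + k) <= (Y + th) * e * (1 + 2 * L * INR k)) by nra.
      assert ((1 + 2 * L * INR k) <= (1 + 2 * L) * (INR k + 1)) by nra.
      assert (0 <= (Y + th) * e) by nra.
      assert ((Y + th) * e * (1 + 2 * L * INR k) <= (Y + th) * e * ((1 + 2 * L) * (4 * e))).
      { apply Rmult_le_compat_l; [lra|]. eapply Rle_trans; [eassumption|].
        apply Rmult_le_compat_l; lra. }
      nra. }
    assert (Dm : d_m a b (A 0%nat) (B 0%nat) m <= K0 * (Y + th) / (1 - qh)).
    { unfold d_m.
      assert (Hs : is_series (fun k => K0 * (Y + th) * qh ^ k) (K0 * (Y + th) * / (1 - qh))).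
      { apply (is_series_scal_l (K0 * (Y + th)) (fun k => qh ^ k)). apply is_series_geom.
        rewrite Rabs_pos_eq; lra. }
      unfold Rdiv. rewrite <- (is_series_unique _ _ Hs).
      apply Series_le; [| eexists; exact Hs].
      intro k. split; [apply Rmult_le_pos; [left; apply exp_pos| apply jdiff_nonneg]|].
      pose proof (Term k).
      assert (exp (- INR k) * exp (INR k / 2) = qh ^ k).
      { rewrite <- exp_plus. unfold qh. rewrite <- exp_mult_nat. f_equal. lra. }
      pose proof (exp_pos (- INR k)).
      apply Rmult_le_compat_l with (r := exp (- INR k)) in H; [| lra].
      rewrite <- H1. lra. }
    destruct (d_glb p a0 b0 a b m H0) as [_ [_ [G3 _]]].
    eapply Rle_trans; [apply G3; exists (A 0%nat), (B 0%nat); split; [apply HTi| reflexivity]|].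
    eapply Rle_trans; [exact Dm|]. unfold C1, K0, Rdiv. fold L. right; ring. }
  destruct (Rle_lt_dec (d_torus p a0 b0 a b m) (C1 p pi eps * Y)) as [h|h]; [exact h|].
  exfalso. set (th := (d_torus p a0 b0 a b m - C1 p pi eps * Y) / (2 * C1 p pi eps)).
  assert (Hth : 0 < th) by (unfold th; apply Rdiv_lt_0_compat; lra).
  pose proof (Key th Hth).
  assert (C1 p pi eps * (Y + th) = C1 p pi eps * Y + (d_torus p a0 b0 a b m - C1 p pi eps * Y) / 2)
    by (unfold th; field; lra).
  lra.
Qed.

Lemma Rbar_mult_pinf C : 0 < C -> Rbar_mult (Finite C) p_infty = p_infty.
Proof.
  intro H. simpl. destruct (Rle_dec 0 C) as [h|h]; [|lra].
  destruct (Rle_lt_or_eq_dec 0 C h); [reflexivity| lra].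
Qed.

Lemma rpow_nonneg x y : 0 <= rpow x y.
Proof. unfold rpow. destruct (Rlt_dec 0 x); [left; apply exp_pos| lra]. Qed.
Lemma rpow_pos x y : 0 < x -> rpow x y = Rpower x y.
Proof. intro H; unfold rpow; destruct (Rlt_dec 0 x); [reflexivity| lra]. Qed.
Lemma rpow_npos x y : x <= 0 -> rpow x y = 0.
Proof. intro H; unfold rpow; destruct (Rlt_dec 0 x); [lra| reflexivity]. Qed.
Lemma rpow_le x x' y : 0 <= y -> x <= x' -> rpow x y <= rpow x' y.
Proof.
  intros Hy Hx. destruct (Rlt_dec 0 x) as [h|h].
  - rewrite !rpow_pos by lra. apply Rle_Rpower_l; lra.
  - rewrite (rpow_npos x) by lra. apply rpow_nonneg.
Qed.
Lemma rpow_mult c x y : 0 < c -> 0 <= x -> rpow (c * x) y = Rpower c y * rpow x y.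
Proof.
  intros Hc Hx. destruct (Rle_lt_or_eq_dec 0 x Hx) as [h| <-].
  - rewrite !rpow_pos by nra. rewrite Rpower_mult_distr; auto.
  - rewrite Rmult_0_r, !rpow_npos by lra. ring.
Qed.
Lemma rpow_inv q x : 0 < q -> 0 <= x -> rpow (rpow x q) (/ q) = x.
Proof.
  intros Hq Hx. destruct (Rle_lt_or_eq_dec 0 x Hx) as [h| <-].
  - rewrite (rpow_pos x) by auto. rewrite rpow_pos by (apply exp_pos).
    rewrite Rpower_mult, Rinv_r by lra. apply Rpower_1; auto.
  - rewrite (rpow_npos 0) by lra. apply rpow_npos; lra.
Qed.
Lemma Rpower_pos c y : 0 < Rpower c y.
Proof. apply exp_pos. Qed.

Lemma per_bound p (f : Z -> R) : (1 <= p)%nat -> (forall z, f (z + Z.of_nat p)%Z = f z) ->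
  forall z, Rabs (f z) <= fsum (fun k => Rabs (f (Z.of_nat (1 + k)))) p.
Proof.
  intros Hp Hf z. destruct (per_reduce p 0 z Hp) as [k [q [Hk ->]]].
  rewrite (per_shift p f Hf). simpl.
  apply (fsum_term (fun k => Rabs (f (Z.of_nat (S k))))); [intros; apply Rabs_pos| exact Hk].
Qed.

Lemma fsum_sum_n u n : fsum u (S n) = sum_n u n.
Proof.
  induction n. - simpl. rewrite sum_O. ring.
  - rewrite sum_Sn. change (fsum u (S (S n))) with (fsum u (S n) + u (S n)). rewrite IHn. reflexivity.
Qed.

Lemma fsum_le_Series u n : (forall k, 0 <= u k) -> ex_series u -> fsum u n <= Series u.
Proof.
  intros H Hex. apply Rle_trans with (fsum u (S n)).
  { simpl. pose proof (H n). lra. }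
  rewrite fsum_sum_n.
  apply (is_lim_seq_incr_compare (sum_n u) (Series u)).
  - apply Series_correct in Hex. exact Hex.
  - intro k. rewrite sum_Sn. pose proof (H (S k)). unfold plus; simpl; lra.
Qed.

Lemma d_m_ex p a0 b0 eps (a b : nat -> R) M a' b' m :
  (1 <= p)%nat -> 0 < eps -> (forall n, (1 <= n)%nat -> eps < a n < / eps) ->
  (forall n, (1 <= n)%nat -> Rabs (b n) <= M) -> iso_torus p a0 b0 a' b' -> (1 <= m)%nat ->
  ex_series (fun k => exp (- INR k) * jdiff a b a' b' (m + k)).
Proof.
  intros Hp He Hab Hb [[Pa [Pb _]] _] Hm.
  set (Ka := fsum (fun k => Rabs (a' (Z.of_nat (1 + k)))) p).
  set (Kb := fsum (fun k => Rabs (b' (Z.of_nat (1 + k)))) p).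
  set (K := / eps + M + Ka + Kb).
  apply (@ex_series_le R_AbsRing R_CompleteNormedModule _ (fun k => K * exp (-1) ^ k)).
  - intro k. change (norm (exp (- INR k) * jdiff a b a' b' (m + k))) with (Rabs (exp (- INR k) * jdiff a b a' b' (m + k))).
    rewrite Rabs_pos_eq by (apply Rmult_le_pos; [left; apply exp_pos| apply jdiff_nonneg]).
    rewrite <- exp_mult_nat. replace (INR k * -1) with (- INR k) by ring.
    rewrite Rmult_comm. apply Rmult_le_compat_r; [left; apply exp_pos|].
    unfold jdiff. pose proof (Hab (m + k)%nat ltac:(lia)). pose proof (Hb (m + k)%nat ltac:(lia)).
    pose proof (per_bound p a' Hp Pa (Z.of_nat (m + k))). pose proof (per_bound p b' Hp Pb (Z.of_nat (m + k))).
    fold Ka Kb in H1, H2.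
    pose proof (Rabs_triang (a (m + k)%nat) (- a' (Z.of_nat (m + k)))).
    pose proof (Rabs_triang (b (m + k)%nat) (- b' (Z.of_nat (m + k)))).
    rewrite Rabs_Ropp in H3, H4. rewrite (Rabs_pos_eq (a (m + k)%nat)) in H3 by lra.
    unfold Rminus. unfold K. lra.
  - exists (K * / (1 - exp (-1))). apply (is_series_scal_l K (fun k => exp (-1) ^ k)).
    apply is_series_geom. rewrite Rabs_pos_eq by (left; apply exp_pos).
    rewrite <- exp_0. apply exp_increasing; lra.
Qed.

Lemma lower_point p a0 b0 eps (a b : nat -> R) M m :
  (1 <= p)%nat -> periodic_jacobi p a0 b0 -> 0 < eps -> (forall n, (1 <= n)%nat -> eps < a n < / eps) ->
  (forall n, (1 <= n)%nat -> Rabs (b n) <= M) -> (1 <= m)%nat ->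
  exp (1 - INR p) * dt_torus p a0 b0 a b m <= d_torus p a0 b0 a b m.
Proof.
  intros Hp H0 He Hab Hb Hm.
  destruct (d_glb p a0 b0 a b m H0) as [_ [_ [_ [_ G5]]]]. apply G5.
  intros x [a' [b' [HT ->]]].
  destruct (dt_glb p a0 b0 a b m H0) as [_ [_ [G3 _]]].
  assert (X : dt_torus p a0 b0 a b m <= dt_m p a b a' b' m) by (apply G3; exists a', b'; auto).
  apply Rle_trans with (exp (1 - INR p) * dt_m p a b a' b' m).
  { apply Rmult_le_compat_l; [left; apply exp_pos| exact X]. }
  unfold dt_m, d_m. rewrite <- fsum_scal.
  apply Rle_trans with (fsum (fun k => exp (- INR k) * jdiff a b a' b' (m + k)) p).
  - apply fsum_le. intros k Hk. apply Rmult_le_compat_r; [apply jdiff_nonneg|].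
    apply exp_le. apply le_INR in Hk. rewrite S_INR in Hk. lra.
  - apply fsum_le_Series.
    + intro k; apply Rmult_le_pos; [left; apply exp_pos| apply jdiff_nonneg].
    + apply (d_m_ex p a0 b0 eps a b M a' b' m); auto.
Qed.

Lemma Rbar_le_pinf x : Rbar_le x p_infty.
Proof. destruct x; simpl; auto. Qed.

Lemma ex_series_zero : ex_series (fun _ : nat => 0) /\ Series (fun _ : nat => 0) = 0.
Proof.
  assert (H : is_series (fun _ : nat => 0) 0).
  { assert (Hg : Rabs (/2) < 1) by (rewrite Rabs_pos_eq; lra).
    pose proof (is_series_scal_l 0 (fun n => (/2) ^ n) _ (is_series_geom (/2) Hg)) as X.
    unfold scal in X; simpl in X; unfold mult in X; simpl in X. rewrite Rmult_0_l in X.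
    eapply is_series_ext; [| exact X]. intro n. simpl. unfold scal; simpl; unfold mult; simpl. ring. }
  split; [exists 0; exact H| apply is_series_unique; exact H].
Qed.

Lemma swap_series (h : nat -> nat -> R) : (forall j, ex_series (h j)) ->
  forall N, ex_series (fun i => fsum (fun j => h j i) N) /\
            Series (fun i => fsum (fun j => h j i) N) = fsum (fun j => Series (h j)) N.
Proof.
  intros Hex N. induction N as [|N [IH1 IH2]].
  - simpl. apply ex_series_zero.
  - simpl fsum. split.
    + apply (@ex_series_plus R_AbsRing R_NormedModule); auto.
    + rewrite Series_plus; auto. rewrite IH2. reflexivity.
Qed.

Lemma term_le_Series v i : (forall k, 0 <= v k) -> ex_series v -> v i <= Series v.
Proof.
  intros H Hex. apply Rle_trans with (fsum v (S i)).
  - apply (fsum_term v (S i) i); auto.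
  - apply fsum_le_Series; auto.
Qed.

Lemma fsum_shift u i N : fsum (fun j => u (j + i)%nat) N + fsum u i = fsum u (N + i).
Proof. induction N; simpl; [ring|]. rewrite <- IHN. ring. Qed.

Lemma lim_cases u : (forall n, 0 <= u n) -> (forall n, u n <= u (S n)) ->
  Lim_seq u = p_infty \/ exists S, Lim_seq u = Finite S /\ 0 <= S /\ forall n, u n <= S.
Proof.
  intros H0 Hi. pose proof (Lim_seq_correct u (ex_lim_seq_incr u Hi)) as Hl.
  destruct (Lim_seq u) as [s| |] eqn:E.
  - right. exists s. pose proof (is_lim_seq_incr_compare u s Hl Hi) as X.
    split; [reflexivity| split; auto]. pose proof (H0 O); pose proof (X O); lra.
  - left; reflexivity.
  - exfalso. assert (Rbar_le (Lim_seq (fun _ => 0)) (Lim_seq u)).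
    { apply Lim_seq_le_loc. exists O; intros; auto. }
    rewrite Lim_seq_const, E in H. simpl in H. exact H.
Qed.

Definition Pq (q : R) (f : nat -> R) (N : nat) : R := fsum (fun i => rpow (Rabs (f (S i))) q) N.

Lemma Pq_props q f : (forall n, 0 <= Pq q f n) /\ (forall n, Pq q f n <= Pq q f (S n)).
Proof.
  split.
  - intro n; apply fsum_nonneg; intros; apply rpow_nonneg.
  - intro n; unfold Pq; simpl. pose proof (rpow_nonneg (Rabs (f (S n))) q); lra.
Qed.

Lemma lq_lower_fin q c g f : 1 <= q -> 0 < c -> (forall i, 0 <= g (S i)) ->
  (forall i, c * g (S i) <= f (S i)) ->
  Rbar_le (Rbar_mult c (lq_norm (Finite q) g)) (lq_norm (Finite q) f).
Proof.
  intros Hq Hc Hg Hf. unfold lq_norm.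
  change (fun N => fsum (fun i => rpow (Rabs (g (S i))) q) N) with (Pq q g).
  change (fun N => fsum (fun i => rpow (Rabs (f (S i))) q) N) with (Pq q f).
  set (cq := Rpower c q).
  assert (Hcmp : forall N, cq * Pq q g N <= Pq q f N).
  { intro N. unfold Pq. rewrite <- fsum_scal. apply fsum_le. intros i _.
    pose proof (Hg i). pose proof (Hf i).
    rewrite (Rabs_pos_eq (g (S i))), (Rabs_pos_eq (f (S i))) by nra.
    unfold cq. rewrite <- rpow_mult by lra. apply rpow_le; lra. }
  assert (Hlim : Rbar_le (Rbar_mult cq (Lim_seq (Pq q g))) (Lim_seq (Pq q f))).
  { rewrite <- Lim_seq_scal_l. apply Lim_seq_le_loc. exists O; intros; auto. }
  assert (Hcq : 0 < cq) by apply Rpower_pos.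
  destruct (Pq_props q g) as [G1 G2]. destruct (Pq_props q f) as [F1 F2].
  destruct (lim_cases _ G1 G2) as [Eg | [Sg [Eg [HSg _]]]];
  destruct (lim_cases _ F1 F2) as [Ef | [Sf [Ef [HSf _]]]]; rewrite Eg, Ef in *.
  - rewrite Rbar_mult_pinf by lra. apply Rbar_le_pinf.
  - rewrite Rbar_mult_pinf in Hlim by lra. simpl in Hlim. contradiction.
  - apply Rbar_le_pinf.
  - simpl in Hlim. simpl.
    assert (c * rpow Sg (/ q) = rpow (cq * Sg) (/ q)).
    { rewrite rpow_mult by lra. unfold cq. rewrite Rpower_mult, Rinv_r by lra. rewrite Rpower_1 by lra. reflexivity. }
    rewrite H. apply rpow_le; [left; apply Rinv_0_lt_compat; lra| exact Hlim].
Qed.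

Lemma lq_lower_inf c g f : 0 < c -> (forall i, 0 <= g (S i)) ->
  (forall i, c * g (S i) <= f (S i)) ->
  Rbar_le (Rbar_mult c (lq_norm p_infty g)) (lq_norm p_infty f).
Proof.
  intros Hc Hg Hf. unfold lq_norm. rewrite <- Sup_seq_scal_l by lra.
  apply Sup_seq_le. intro n. simpl.
  pose proof (Hg n). pose proof (Hf n).
  rewrite (Rabs_pos_eq (g (S n))), (Rabs_pos_eq (f (S n))) by nra. exact H0.
Qed.

Definition qf : R := exp (- / 4).
Definition K4 : R := / (1 - qf).
Lemma qf_bounds : 0 < qf < 1.
Proof. unfold qf. split; [apply exp_pos|]. rewrite <- exp_0. apply exp_increasing. lra. Qed.
Lemma K4_ge1 : 1 <= K4.
Proof.
  unfold K4. pose proof qf_bounds. rewrite <- Rinv_1. apply Rinv_le_contravar; lra.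
Qed.
Lemma qf_exp i : qf ^ i * exp (INR i / 4) = 1.
Proof.
  unfold qf. rewrite <- exp_mult_nat, <- exp_plus. rewrite <- exp_0. f_equal. field.
Qed.

Lemma lq_upper_fin q g d C1 : 1 <= q -> 0 < C1 -> (forall i, 0 <= g (S i)) -> (forall i, 0 <= d (S i)) ->
  (forall j Y, 0 <= Y -> (forall i, g (S j + i)%nat <= Y * exp (INR i / 4)) -> d (S j) <= C1 * Y) ->
  Rbar_le (lq_norm (Finite q) d) (Rbar_mult (C1 * K4) (lq_norm (Finite q) g)).
Proof.
  intros Hq HC Hg Hd Hch. unfold lq_norm.
  change (fun N => fsum (fun i => rpow (Rabs (g (S i))) q) N) with (Pq q g).
  change (fun N => fsum (fun i => rpow (Rabs (d (S i))) q) N) with (Pq q d).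
  pose proof qf_bounds as Hqf. pose proof K4_ge1 as HK.
  destruct (Pq_props q g) as [G1 G2].
  destruct (lim_cases _ G1 G2) as [Eg | [Sg [Eg [HSg Hbd]]]]; rewrite Eg.
  { rewrite Rbar_mult_pinf by nra. apply Rbar_le_pinf. }
  set (u := fun j => rpow (g (S j)) q).
  assert (Hu0 : forall j, 0 <= u j) by (intro; apply rpow_nonneg).
  assert (Hsh : forall i N, fsum (fun j => u (j + i)%nat) N <= Sg).
  { intros i N. pose proof (fsum_shift u i N). pose proof (fsum_nonneg u i ltac:(auto)).
    pose proof (Hbd (N + i)%nat). unfold Pq in H1.
    rewrite (fsum_ext _ u) in H1 by (intros; unfold u; rewrite Rabs_pos_eq by auto; reflexivity). lra. }
  assert (Hu : forall j, u j <= Sg).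
  { intro j. pose proof (Hsh j 1%nat). simpl in H. lra. }
  assert (Hex : forall j, ex_series (fun i => qf ^ i * u (j + i)%nat)).
  { intro j. apply (@ex_series_le R_AbsRing R_CompleteNormedModule _ (fun i => Sg * qf ^ i)).
    - intro i. change (norm (qf ^ i * u (j + i)%nat)) with (Rabs (qf ^ i * u (j + i)%nat)).
      rewrite Rabs_pos_eq by (apply Rmult_le_pos; [apply pow_le; lra| auto]).
      rewrite Rmult_comm. apply Rmult_le_compat_r; [apply pow_le; lra| auto].
    - exists (Sg * / (1 - qf)). apply (is_series_scal_l Sg (fun k => qf ^ k)). apply is_series_geom.
      rewrite Rabs_pos_eq; lra. }
  set (Zs := fun j => Series (fun i => qf ^ i * u (j + i)%nat)).
  assert (HZ0 : forall j, 0 <= Zs j).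
  { intro j. apply Series_nonneg'. intro i. apply Rmult_le_pos; [apply pow_le; lra| auto]. }
  assert (PD : forall j, rpow (d (S j)) q <= Rpower C1 q * Zs j).
  { intro j. set (Y := rpow (Zs j) (/ q)).
    assert (HY : 0 <= Y) by apply rpow_nonneg.
    assert (Hgi : forall i, g (S j + i)%nat <= Y * exp (INR i / 4)).
    { intro i. replace (S j + i)%nat with (S (j + i)) by lia.
      pose proof (Hg (j + i)%nat) as g0.
      assert (0 <= exp (INR i / 4)) by (left; apply exp_pos).
      destruct (Rle_lt_or_eq_dec _ _ g0) as [gp| g0'].
      2:{ rewrite <- g0'. nra. }
      assert (T : qf ^ i * u (j + i)%nat <= Zs j).
      { apply (term_le_Series (fun i => qf ^ i * u (j + i)%nat)); [| apply Hex].
        intro k. apply Rmult_le_pos; [apply pow_le; lra| auto]. }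
      assert (T2 : u (j + i)%nat <= exp (INR i / 4) * Zs j).
      { pose proof (qf_exp i). apply Rmult_le_compat_l with (r := exp (INR i / 4)) in T; [| lra].
        replace (exp (INR i / 4) * (qf ^ i * u (j + i)%nat)) with (qf ^ i * exp (INR i / 4) * u (j + i)%nat) in T by ring.
        rewrite H0, Rmult_1_l in T. exact T. }
      rewrite <- (rpow_inv q (g (S (j + i)))) by lra. fold (u (j + i)%nat).
      apply Rle_trans with (rpow (exp (INR i / 4) * Zs j) (/ q)).
      { apply rpow_le; [left; apply Rinv_0_lt_compat; lra| exact T2]. }
      rewrite rpow_mult by (auto; apply exp_pos). fold Y. rewrite Rmult_comm.
      apply Rmult_le_compat_l; [exact HY|].
      unfold Rpower. rewrite ln_exp. apply exp_le.
      assert (0 < / q <= 1) by (split; [apply Rinv_0_lt_compat; lra| rewrite <- Rinv_1; apply Rinv_le_contravar; lra]).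
      pose proof (pos_INR i). nra. }
    pose proof (Hch j Y HY Hgi) as Dj.
    apply Rle_trans with (rpow (C1 * Y) q); [apply rpow_le; lra|].
    rewrite rpow_mult by lra. apply Rmult_le_compat_l; [left; apply Rpower_pos|].
    unfold Y. replace q with (/ / q) at 2 by (field; lra). rewrite rpow_inv; [lra| apply Rinv_0_lt_compat; lra| auto]. }
  set (B := Rpower C1 q * (K4 * Sg)).
  assert (HPd : forall N, Pq q d N <= B).
  { intro N. apply Rle_trans with (Rpower C1 q * fsum Zs N).
    - unfold Pq. rewrite <- fsum_scal. apply fsum_le. intros j _. rewrite Rabs_pos_eq by auto. apply PD.
    - unfold B. apply Rmult_le_compat_l; [left; apply Rpower_pos|].
      destruct (swap_series (fun j i => qf ^ i * u (j + i)%nat) Hex N) as [Ex Eq].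
      unfold Zs. rewrite <- Eq.
      assert (Hs : is_series (fun k => Sg * qf ^ k) (Sg * / (1 - qf))).
      { apply (is_series_scal_l Sg (fun k => qf ^ k)). apply is_series_geom. rewrite Rabs_pos_eq; lra. }
      replace (K4 * Sg) with (Sg * / (1 - qf)) by (unfold K4; ring).
      rewrite <- (is_series_unique _ _ Hs). apply Series_le; [| eexists; exact Hs].
      intro i. split.
      + apply fsum_nonneg. intros. apply Rmult_le_pos; [apply pow_le; lra| auto].
      + rewrite fsum_scal. rewrite Rmult_comm. apply Rmult_le_compat_r; [apply pow_le; lra|].
        apply Hsh. }
  destruct (Pq_props q d) as [D1 D2].
  assert (HL : Rbar_le (Lim_seq (Pq q d)) (Lim_seq (fun _ => B))) by (apply Lim_seq_le_loc; exists O; intros; auto).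
  rewrite Lim_seq_const in HL.
  destruct (lim_cases _ D1 D2) as [Ed | [Sd [Ed [HSd _]]]]; rewrite Ed in *; simpl in HL; [contradiction|].
  simpl.
  apply Rle_trans with (rpow B (/ q)); [apply rpow_le; [left; apply Rinv_0_lt_compat; lra| exact HL]|].
  unfold B. rewrite rpow_mult by (try apply Rpower_pos; nra). rewrite rpow_mult by nra.
  rewrite Rpower_mult, Rinv_r, Rpower_1 by lra.
  assert (Rpower K4 (/ q) <= K4).
  { rewrite <- (Rpower_1 K4) at 2 by lra. apply Rle_Rpower; [lra|].
    rewrite <- Rinv_1; apply Rinv_le_contravar; lra. }
  pose proof (rpow_nonneg Sg (/ q)). pose proof (Rpower_pos K4 (/ q)).
  assert (Rpower K4 (/ q) * rpow Sg (/ q) <= K4 * rpow Sg (/ q)) by (apply Rmult_le_compat_r; lra).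
  replace (C1 * K4 * rpow Sg (/ q)) with (C1 * (K4 * rpow Sg (/ q))) by ring.
  apply Rmult_le_compat_l; lra.
Qed.

Lemma lq_upper_inf g d C1 : 0 < C1 -> (forall i, 0 <= g (S i)) -> (forall i, 0 <= d (S i)) ->
  (forall j Y, 0 <= Y -> (forall i, g (S j + i)%nat <= Y * exp (INR i / 4)) -> d (S j) <= C1 * Y) ->
  Rbar_le (lq_norm p_infty d) (Rbar_mult (C1 * K4) (lq_norm p_infty g)).
Proof.
  intros HC Hg Hd Hch. unfold lq_norm. pose proof K4_ge1 as HK.
  assert (Hm : forall i, Rbar_le (Finite (Rabs (g (S i)))) (Sup_seq (fun i => Finite (Rabs (g (S i)))))).
  { intro i. apply (Sup_seq_minor_le _ _ i). simpl. lra. }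
  destruct (Sup_seq (fun i => Finite (Rabs (g (S i))))) as [Yg| |] eqn:E.
  - assert (Hb : forall i, g (S i) <= Yg).
    { intro i. pose proof (Hm i) as X. simpl in X. rewrite Rabs_pos_eq in X by auto. exact X. }
    assert (HY : 0 <= Yg) by (pose proof (Hb O); pose proof (Hg O); lra).
    assert (Hdi : forall i, d (S i) <= C1 * Yg).
    { intro j. apply Hch; auto. intro i. replace (S j + i)%nat with (S (j + i)) by lia.
      pose proof (Hb (j + i)%nat). assert (1 <= exp (INR i / 4)) by (rewrite <- exp_0; apply exp_le; pose proof (pos_INR i); lra).
      nra. }
    simpl.
    destruct (Rbar_le_lt_dec (Sup_seq (fun i => Finite (Rabs (d (S i))))) (C1 * K4 * Yg)) as [h|h]; [exact h|].
    exfalso. apply Sup_seq_minor_lt in h. destruct h as [n h]. simpl in h.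
    rewrite Rabs_pos_eq in h by auto. pose proof (Hdi n).
    assert (C1 * Yg <= C1 * K4 * Yg) by (rewrite Rmult_assoc; apply Rmult_le_compat_l; nra). lra.
  - rewrite Rbar_mult_pinf by nra. apply Rbar_le_pinf.
  - exfalso. pose proof (Hm O) as X. simpl in X. exact X.
Qed.

Theorem proposition3p5 (p : nat) (a0 b0 : Z -> R) :
  (1 <= p)%nat ->
  periodic_jacobi p a0 b0 ->
  forall q : Rbar, Rbar_le (Finite 1) q ->
  forall eps : R, 0 < eps ->
  exists C : R, 0 < C /\
    forall a b : nat -> R,
      (forall n : nat, (1 <= n)%nat -> eps < a n < / eps) ->
      (exists M : R, forall n : nat, (1 <= n)%nat -> Rabs (b n) <= M) ->
      Rbar_le (Rbar_mult (Finite (exp (1 - INR p)))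
                         (lq_norm q (dt_torus p a0 b0 a b)))
              (lq_norm q (d_torus p a0 b0 a b)) /\
      Rbar_le (lq_norm q (d_torus p a0 b0 a b))
              (Rbar_mult (Finite C) (lq_norm q (dt_torus p a0 b0 a b))).
Proof.
  intros Hp H0 q Hq eps He.
  set (C1v := C1 p (pr a0 p) eps).
  assert (HC1 : 0 < C1v).
  { unfold C1v, C1. pose proof qh_bounds. pose proof (Lc_ge1 p (pr a0 p) eps ltac:(apply pr_pos; apply H0) He).
    apply Rdiv_lt_0_compat; lra. }
  pose proof K4_ge1 as HK.
  exists (C1v * K4). split; [nra|].
  intros a b Hab [M Hb].
  assert (Hg : forall i, 0 <= dt_torus p a0 b0 a b (S i)).
  { intro i. destruct (dt_glb p a0 b0 a b (S i) H0) as [_ [G2 _]]. exact G2. }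
  assert (Hd : forall i, 0 <= d_torus p a0 b0 a b (S i)).
  { intro i. destruct (d_glb p a0 b0 a b (S i) H0) as [_ [G2 _]]. exact G2. }
  assert (Hlow : forall i, exp (1 - INR p) * dt_torus p a0 b0 a b (S i) <= d_torus p a0 b0 a b (S i)).
  { intro i. apply (lower_point p a0 b0 eps a b M); auto; lia. }
  assert (Hch : forall j Y, 0 <= Y -> (forall i, dt_torus p a0 b0 a b (S j + i)%nat <= Y * exp (INR i / 4)) ->
            d_torus p a0 b0 a b (S j) <= C1v * Y).
  { intros j Y HY Hi. apply (chain p a0 b0 eps a b (S j) Y); auto; lia. }
  destruct q as [q| |]; simpl in Hq; [| | contradiction].
  - split.
    + apply lq_lower_fin; auto. apply exp_pos.
    + apply lq_upper_fin; auto.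
  - split.
    + apply lq_lower_inf; auto. apply exp_pos.
    + apply lq_upper_inf; auto.
Qed.
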